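(* Let $d\ge2$ and let $A$ be a subset of $\Delta\cap B_{\rm o}$. Then (1) $A$ is a germ if and only if $A\subseteq A^*$; (2) $A$ is a maximal germ if and only if $A=A^*$. In particular, a subset of $\Delta$ is a maximal germ if and only if it is a qplex.
   Context: Fix an integer $d\ge 2$. $\langle\cdot,\cdot\rangle$ is the standard inner product on $\mathbb{R}^{d^2}$, $\|\cdot\|$ the Euclidean norm. $\Delta=\{p\in\mathbb{R}^{d^2}: p(i)\ge0,\ \sum_ip(i)=1\}$; $H=\{u\in\mathbb{R}^{d^2}:\sum_i u(i)=1\}$; $c=(1/d^2,\dots,1/d^2)$. For $A\subseteq H$ the polar is $A^*=\{u\in H:\langle u,v\rangle\ge\frac{1}{d(d+1)}\ \forall v\in A\}$. The out-ball is $B_{\rm o}=\{u\in H:\|u-c\|\le r_{\rm o}\}$ with $r_{\rm o}^2=\frac{d-1}{d^2(d+1)}$ (equivalently $\langle u,u\rangle\le\frac{2}{d(d+1)}$). A subset $A\subseteq\Delta$ is a germ if $\frac{1}{d(d+1)}\le\langle p,s\rangle\le\frac{2}{d(d+1)}$ for all $p,s\in A$ (including $p=s$); a germ is maximal if no point of $\Delta$ can be added to it while keeping it a germ. A qplex is a set $Q\subseteq\Delta\cap B_{\rm o}$ with $Q^*=Q$. *)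

(* Defs.v *)
From HB Require Import structures.
From mathcomp Require Import all_boot all_order all_algebra.
Set Implicit Arguments. Unset Strict Implicit. Unset Printing Implicit Defensive.
Import Order.TTheory GRing.Theory Num.Theory.
Local Open Scope ring_scope.

Section Qplex.
Variables (R : realFieldType) (d : nat).

Definition vec := 'rV[R]_(d ^ 2).

Definition vset := vec -> Prop.

Definition dot (u v : vec) : R := \sum_(i < d ^ 2) u 0 i * v 0 i.

Definition lowc : R := ((d * (d + 1))%N%:R)^-1.
Definition upc : R := 2 / ((d * (d + 1))%N%:R).

Definition inH (u : vec) : Prop := \sum_(i < d ^ 2) u 0 i = 1.

Definition inDelta (p : vec) : Prop := (forall i, 0 <= p 0 i) /\ inH p.

(* out-ball B_o, in the equivalent form <u,u> <= 2/(d(d+1)) within H *)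
Definition inBo (u : vec) : Prop := inH u /\ dot u u <= upc.

Definition polar (A : vset) : vset :=
  fun u => inH u /\ forall v, A v -> lowc <= dot u v.

Definition vsubset (A B : vset) : Prop := forall u, A u -> B u.
Definition seteq (A B : vset) : Prop := forall u, A u <-> B u.

Definition germ (A : vset) : Prop :=
  vsubset A inDelta /\
  forall p s, A p -> A s -> lowc <= dot p s /\ dot p s <= upc.

Definition add_pt (A : vset) (p : vec) : vset := fun u => A u \/ u = p.

Definition maximal_germ (A : vset) : Prop :=
  germ A /\ forall p, inDelta p -> ~ A p -> ~ germ (add_pt A p).

Definition qplex (Q : vset) : Prop :=
  vsubset Q (fun u => inDelta u /\ inBo u) /\ seteq (polar Q) Q.

End Qplex.

(* Main.v *)
Require Import Defs.
From HB Require Import structures.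
From mathcomp Require Import all_boot all_order all_algebra ring lra.
From Stdlib Require Import Classical.
Import Order.TTheory GRing.Theory Num.Theory.
Local Open Scope ring_scope.

Section S.
Variables (R : realFieldType) (d : nat).
Hypothesis hd : (2 <= d)%N.

Local Notation vec := (vec R d).
Local Notation n := (d ^ 2)%N.
Local Notation D := (d%:R : R).
Definition sm (x : vec) : R := \sum_(i < n) x 0 i.
Definition aff (a b : R) (x : vec) : vec := \row_j (a + b * x 0 j).
Definition ev (i : 'I_n) : vec := \row_j ((j == i)%:R).

Lemma dotC (x y : vec) : dot x y = dot y x.
Proof. by apply: eq_bigr => i _; rewrite mulrC. Qed.

Lemma dot_aff a b (x s : vec) : dot (aff a b x) s = a * sm s + b * dot x s.
Proof.
rewrite /dot /sm mulr_sumr mulr_sumr -big_split /=.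
by apply: eq_bigr => i _; rewrite mxE mulrDl mulrA.
Qed.

Lemma sm_aff a b (x : vec) : sm (aff a b x) = a * (n%:R) + b * sm x.
Proof.
rewrite /sm mulr_sumr.
have -> : a * n%:R = \sum_(i < n) a by rewrite sumr_const card_ord mulr_natr.
rewrite -big_split /=; by apply: eq_bigr => i _; rewrite mxE.
Qed.

Lemma dot_ev i (s : vec) : dot (ev i) s = s 0 i.
Proof.
rewrite /dot (bigD1 i) //= big1 ?addr0 => [|j hj]; rewrite mxE.
  by rewrite eqxx mul1r.
by rewrite (negbTE hj) mul0r.
Qed.

Lemma sm_ev i : sm (ev i) = 1.
Proof.
rewrite /sm (bigD1 i) //= big1 ?addr0 => [|j hj]; rewrite mxE ?eqxx //.
by rewrite (negbTE hj).
Qed.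

Lemma dot_ge0 (x : vec) : 0 <= dot x x.
Proof. by apply: sumr_ge0 => i _; rewrite -expr2 sqr_ge0. Qed.

Lemma amgm (x y : vec) : 2 * dot x y <= dot x x + dot y y.
Proof.
have h : 0 <= \sum_(i < n) (x 0 i - y 0 i) ^+ 2 by apply: sumr_ge0 => i _; rewrite sqr_ge0.
have e : \sum_(i < n) (x 0 i - y 0 i) ^+ 2 = dot x x + dot y y - 2 * dot x y.
  rewrite /dot mulr_sumr -big_split -sumrB /=; apply: eq_bigr => i _; ring.
by rewrite -subr_ge0 -e.
Qed.

Lemma sq_shift (x : vec) t : \sum_(i < n) (x 0 i - t) ^+ 2 = dot x x - 2 * t * sm x + n%:R * t ^+ 2.
Proof.
have -> : n%:R * t ^+ 2 = \sum_(i < n) t ^+ 2 by rewrite sumr_const card_ord mulr_natl.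
rewrite /dot /sm mulr_sumr -sumrB -big_split /=; apply: eq_bigr => i _; ring.
Qed.

Lemma sq_shift_ge (x : vec) t j : (x 0 j - t) ^+ 2 <= dot x x - 2 * t * sm x + n%:R * t ^+ 2.
Proof.
rewrite -sq_shift (bigD1 j) //= lerDl; apply: sumr_ge0 => i _; exact: sqr_ge0.
Qed.


Lemma D2 : 2 <= D. Proof. by rewrite (ler_nat R 2 d). Qed.
Lemma Dgt0 : 0 < D. Proof. have := D2; lra. Qed.
Lemma nE : (n%:R : R) = D ^+ 2. Proof. by rewrite natrX. Qed.
Lemma lowcE : lowc R d = (D * (D + 1))^-1. Proof. by rewrite /lowc natrM natrD. Qed.
Lemma upcE : upc R d = 2 / (D * (D + 1)). Proof. by rewrite /upc natrM natrD. Qed.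

Lemma low_le_invn : lowc R d <= (n%:R)^-1.
Proof.
rewrite lowcE nE; have h := D2.
rewrite lef_pV2 ?posrE; [nra| nra| nra].
Qed.

Lemma low_le_up : lowc R d <= upc R d.
Proof.
rewrite lowcE upcE; have h := D2.
have : 0 < (D * (D + 1))^-1 by rewrite invr_gt0; nra.
lra.
Qed.

Lemma low_gt0 : 0 < lowc R d.
Proof. rewrite lowcE invr_gt0; have := D2; nra. Qed.


Lemma n_gt1 : 1 < (n%:R : R).
Proof. rewrite nE; have := D2; nra. Qed.

Lemma dotH_ge (x : vec) : inH x -> (n%:R)^-1 <= dot x x.
Proof.
move=> hx; have h := sq_shift x (n%:R)^-1.
have h0 : 0 <= \sum_(i < n) (x 0 i - (n%:R)^-1) ^+ 2 by apply: sumr_ge0 => i _; exact: sqr_ge0.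
have hs : sm x = 1 by [].
have hn := n_gt1.
have ht : (n%:R : R) * (n%:R)^-1 = 1 by rewrite divff //; lra.
rewrite h hs in h0. set t := (n%:R : R)^-1 in ht h0 *.
nra.
Qed.

Lemma inball (x : vec) j : inH x -> dot x x <= (n%:R - 1)^-1 -> 0 <= x 0 j.
Proof.
move=> hx hxx; have h := sq_shift_ge x (n%:R - 1)^-1 j.
have hs : sm x = 1 by [].
have hn := n_gt1.
have ht : ((n%:R : R) - 1) * (n%:R - 1)^-1 = 1 by rewrite divff //; lra.
have htp : 0 < ((n%:R : R) - 1)^-1 by rewrite invr_gt0; lra.
rewrite hs in h. set t := ((n%:R : R) - 1)^-1 in ht h hxx htp *.
rewrite leNgt; apply/negP => hneg.
nra.
Qed.


Lemma germ_up (A : vset R d) s : germ A -> A s -> dot s s <= upc R d.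
Proof. by move=> [_ g] hs; case: (g s s hs hs). Qed.

Lemma cross_up (p s : vec) : dot p p <= upc R d -> dot s s <= upc R d -> dot p s <= upc R d.
Proof. move=> h1 h2; have := amgm p s; lra. Qed.

Lemma addable (A : vset R d) p : maximal_germ A -> inDelta p -> dot p p <= upc R d ->
  (forall s, A s -> lowc R d <= dot p s) -> A p.
Proof.
move=> [g mx] hp hpp hs; apply: NNPP => np; apply: (mx p hp np).
have hpl : lowc R d <= dot p p.
  have := dotH_ge p hp.2; have := low_le_invn; lra.
split.
  move=> u [hu|->] //; exact: g.1.
move=> a b [ha|->] [hb|->].
- exact: g.2.
- by rewrite dotC; split; [exact: hs| apply: cross_up => //; exact: germ_up g ha].
- by split; [exact: hs| apply: cross_up => //; exact: germ_up g hb].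
- by split.
Qed.

Lemma part1 (A : vset R d) : vsubset A (fun u => inDelta u /\ inBo u) ->
  (germ A <-> vsubset A (polar A)).
Proof.
move=> hA; split.
  move=> g u hu; split; first exact: (hA u hu).1.2.
  by move=> v hv; case: (g.2 u v hu hv).
move=> hP; split; first by move=> u hu; exact: (hA u hu).1.
move=> p s hp hs; split; first exact: (hP p hp).2 s hs.
apply: cross_up; [exact: (hA p hp).2.2 | exact: (hA s hs).2.2].
Qed.

Lemma part2b (A : vset R d) : vsubset A (fun u => inDelta u /\ inBo u) ->
  seteq A (polar A) -> maximal_germ A.
Proof.
move=> hA he; have g : germ A.
  have := part1 A hA. move=> [_ h]; apply: h => u hu. by apply/(he u).
split => // p hp np gp; apply: np; apply/(he p); split; first exact: hp.2.
move=> v hv; have := gp.2 p v (or_intror erefl) (or_introl hv); by case.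
Qed.


Lemma consts :
  let t0 := (n%:R : R)^-1 in let m := ((n%:R : R) - 1)^-1 in
  [/\ t0 * n%:R = 1, 0 < t0 - lowc R d, 0 < upc R d - t0,
      (t0 - lowc R d) ^+ 2 = (upc R d - t0) * (m - t0) & m <= upc R d].
Proof.
move=> t0 m; rewrite /t0 /m lowcE upcE nE; have h := D2.
have hD : D != 0 by apply/eqP => e; rewrite e in h; lra.
have hD1 : D + 1 != 0 by apply/eqP => e; have : D + 1 = 0 by []; lra.
have hDm : D - 1 != 0 by apply/eqP => e; have : D - 1 = 0 by []; lra.
have hD2 : D ^+ 2 - 1 != 0.
  by apply/eqP => e; have : D ^+ 2 - 1 = 0 by []; rewrite expr2; nra.
split.
- by rewrite mulVf // expf_neq0.
- have -> : (D ^+ 2)^-1 - (D * (D + 1))^-1 = (D ^+ 2 * (D + 1))^-1.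
    by field; rewrite hD1 hD.
  rewrite invr_gt0; nra.
- have -> : 2 / (D * (D + 1)) - (D ^+ 2)^-1 = (D - 1) / (D ^+ 2 * (D + 1)).
    by field; rewrite hD1 hD.
  apply: divr_gt0; nra.
- by field; rewrite hD2 hD1 hD.
- rewrite -subr_ge0.
  have -> : 2 / (D * (D + 1)) - (D ^+ 2 - 1)^-1 = (D - 2) / (D * (D ^+ 2 - 1)).
    by field; rewrite hD2 hD1 hD.
  apply: divr_ge0; first lra.
  rewrite expr2; nra.
Qed.


Lemma qpt_nonneg (A : vset R d) u i : maximal_germ A -> polar A u -> 0 <= u 0 i.
Proof.
move=> mg hu.
set b := (D + 1)^-1.
set q := aff (lowc R d) b (ev i).
have hD := D2.
have hb : 0 < b by rewrite invr_gt0; lra.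
have hL := low_gt0.
have hbL : b * (D * (D + 1)) = D.
  by rewrite /b mulrCA mulVf ?mulr1 //; apply/eqP => e; have : D + 1 = 0 by []; lra.
have hLn : lowc R d * n%:R + b = 1.
  rewrite lowcE nE /b; field.
  by apply/andP; split; apply/eqP => e; [have : D + 1 = 0 by []| have : D = 0 by []]; lra.
have hq : inH q by rewrite /inH -/(sm q) sm_aff sm_ev mulr1.
have hdq (s : vec) : inH s -> dot q s = lowc R d + b * s 0 i.
  by move=> hs; rewrite dot_aff dot_ev; rewrite /inH in hs; rewrite /sm hs mulr1.
have Aq : A q.
  apply: (addable A q mg).
  - split => // j; rewrite mxE mxE; apply: addr_ge0; first lra.
    apply: mulr_ge0; first lra; by case: (j == i).
  - rewrite hdq // mxE mxE eqxx mulr1 upcE.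
    have -> : 2 / (D * (D + 1)) = lowc R d + b * (lowc R d + b).
      rewrite lowcE /b; field.
      by apply/andP; split; apply/eqP => e; [have : D + 1 = 0 by []| have : D = 0 by []]; lra.
    by [].
  - move=> s hs; rewrite hdq; last exact: (mg.1.1 s hs).2.
    have := (mg.1.1 s hs).1 i; have : 0 <= b * s 0 i -> lowc R d <= lowc R d + b * s 0 i by lra.
    move=> h1 h2; apply: h1; exact: mulr_ge0 (ltW hb) h2.
have := hu.2 q Aq; rewrite dotC hdq; last exact: hu.1.
move=> h; have : 0 <= b * u 0 i by lra.
by rewrite pmulr_rge0.
Qed.


Lemma ball_bound (A : vset R d) u : maximal_germ A -> polar A u -> dot u u <= upc R d.
Proof.
move=> mg hu.
have [ht0n hK hRr hKR hm] := consts.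
set t0 := (n%:R : R)^-1 in ht0n hK hRr hKR.
set m := ((n%:R : R) - 1)^-1 in hKR hm.
set K := t0 - lowc R d in hK hKR.
set Rr := upc R d - t0 in hRr hKR.
set N := dot u u - t0.
have hN : 0 <= N by rewrite /N subr_ge0; exact: dotH_ge hu.1.
set lam := 2 * K / (N + Rr).
have hlam : lam * (N + Rr) = 2 * K.
  by rewrite /lam mulfVK //; apply/eqP => e; have : N + Rr = 0 by []; lra.
have hlam0 : 0 <= lam by rewrite /lam; apply: divr_ge0; lra.
have huH : sm u = 1 := hu.1.
set w := aff ((1 + lam) * t0) (- lam) u.
have hwH : inH w.
  rewrite /inH -/(sm w) sm_aff huH -mulrA mulrC ht0n; lra.
have hdw (s : vec) : inH s -> dot w s = (1 + lam) * t0 - lam * dot u s.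
  by move=> hs; rewrite dot_aff /sm hs mulr1 mulNr.
have hduw : dot u w = (1 + lam) * t0 - lam * dot u u by rewrite dotC hdw.
have hww : dot w w = t0 + lam ^+ 2 * N.
  rewrite hdw // hduw /N; ring.
have hww2 : lam ^+ 2 * N <= m - t0.
  have : Rr * (lam ^+ 2 * N) <= Rr * (m - t0).
    rewrite -hKR.
    have hK2 : 4 * K ^+ 2 = lam ^+ 2 * (N + Rr) ^+ 2.
      by rewrite -exprMn hlam; ring.
    have := sqr_ge0 (lam * (N - Rr)).
    have e : (lam * (N - Rr)) ^+ 2 = lam ^+ 2 * (N + Rr) ^+ 2 - 4 * (Rr * (lam ^+ 2 * N)) by ring.
    rewrite e -hK2; lra.
  by rewrite ler_pM2l.
have Aw : A w.
  apply: (addable A w mg).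
  - split => // j; apply: inball => //; rewrite hww -/m; lra.
  - rewrite hww; lra.
  - move=> s hs; have [hsD hsH] := mg.1.1 s hs.
    rewrite hdw //.
    have hss := germ_up A s mg.1 hs.
    have hus := amgm u s.
    have : lam * (2 * dot u s) <= lam * (dot u u + dot s s) by apply: ler_wpM2l.
    rewrite /K /N /Rr in hlam *. nra.
have := hu.2 w Aw; rewrite hduw => h.
have : lam * N <= K by rewrite /N /K in hlam *; nra.
move=> h2.
have : 2 * K * N <= K * (N + Rr) by nra.
rewrite /N /Rr; nra.
Qed.


Lemma part2f (A : vset R d) : maximal_germ A -> seteq A (polar A).
Proof.
move=> mg u; split.
  move=> hu; split; first exact: (mg.1.1 u hu).2.
  by move=> v hv; case: (mg.1.2 u v hu hv).
move=> hu; apply: (addable A u mg).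
- split; last exact: hu.1.
  by move=> i; exact: qpt_nonneg mg hu.
- exact: ball_bound mg hu.
- exact: hu.2.
Qed.

End S.

Theorem mainTheorem3 (R : realFieldType) (d : nat) (hd : (2 <= d)%N) :
  (forall A : vset R d, vsubset A (fun u => inDelta u /\ inBo u) ->
     (germ A <-> vsubset A (polar A)) /\
     (maximal_germ A <-> seteq A (polar A))) /\
  (forall A : vset R d, vsubset A (@inDelta R d) ->
     (maximal_germ A <-> qplex A)).
Proof.
split.
  move=> A hA; split; first exact: part1.
  split; first exact: (@part2f R d hd A).
  exact: (@part2b R d A hA).
move=> A hA; split.
  move=> mg; split.
    move=> u hu; have [hD hH] := mg.1.1 u hu; do 2!split => //.
    exact: (@germ_up R d A u mg.1 hu).
  by move=> u; split => h; apply/(@part2f R d hd A mg u).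
move=> [hq he]; apply: (@part2b R d A hq).
by move=> u; split => h; apply/(he u).
Qed.
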